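(* Let $T$ be a tree and $c$ a caret of $T$, corresponding to the interval $I$. Then there is a tree $T'$, obtained from $T$ by attaching at most one new caret to a leaf and then performing a finite sequence of basic moves, in which the vertex corresponding to $I$ carries a caret of the type opposite to that of $c$ (i.e. $c$ can be switched from $x$-type to $y$-type or vice versa by adding at most one caret).
   Context: Let $\tau=(\sqrt5-1)/2$, so $\tau^2+\tau=1$. A tree is a finite rooted binary tree whose carets (non-leaf vertex with its two children) are each labelled $x$-type or $y$-type. Vertices correspond to subintervals of $[0,1]$: the root to $[0,1]$; if a vertex corresponds to $[p,p+\tau^k]$, an $x$-type caret there gives children $[p,p+\tau^{k+2}]$ (left) and $[p+\tau^{k+2},p+\tau^k]$ (right), and a $y$-type caret gives $[p,p+\tau^{k+1}]$ (left) and $[p+\tau^{k+1},p+\tau^k]$ (right). A basic move replaces, at some vertex of a tree, an $x$-type caret whose right child carries an $x$-type caret by a $y$-type caret whose left child carries a $y$-type caret (keeping the three subtrees hanging below, in the same left-to-right order), or performs the reverse replacement; both configurations subdivide an interval of length $\tau^k$ into consecutive intervals of lengths $\tau^{k+2},\tau^{k+3},\tau^{k+2}$, so a basic move does not change the subdivision into leaf intervals. *)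

(* Defs.v *)
From Stdlib Require Import Reals List Relations.
Open Scope R_scope.

(* tau = (sqrt 5 - 1)/2, so tau^2 + tau = 1 *)
Definition tau : R := (sqrt 5 - 1) / 2.

Inductive ctype : Type := CX | CY.

Definition opp_ctype (c : ctype) : ctype :=
  match c with CX => CY | CY => CX end.

Inductive tree : Type :=
| Leaf : tree
| Node : ctype -> tree -> tree -> tree.

(* The list of all carets of t, each recorded as (left endpoint, right endpoint,
   type) of the interval of the vertex carrying it, when the root of t
   corresponds to [p, p + tau^k]. *)
Fixpoint carets (t : tree) (p : R) (k : nat) : list (R * R * ctype) :=
  match t with
  | Leaf => nil
  | Node CX l r =>
      (p, p + tau ^ k, CX)
        :: carets l p (k + 2) ++ carets r (p + tau ^ (k + 2)) (k + 1)
  | Node CY l r =>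
      (p, p + tau ^ k, CY)
        :: carets l p (k + 1) ++ carets r (p + tau ^ (k + 1)) (k + 2)
  end.

Inductive add_caret : tree -> tree -> Prop :=
| add_leaf (c : ctype) : add_caret Leaf (Node c Leaf Leaf)
| add_left (c : ctype) (l l' r : tree) :
    add_caret l l' -> add_caret (Node c l r) (Node c l' r)
| add_right (c : ctype) (l r r' : tree) :
    add_caret r r' -> add_caret (Node c l r) (Node c l r').

Inductive bmove : tree -> tree -> Prop :=
| bm_xy (a b c : tree) :
    bmove (Node CX a (Node CX b c)) (Node CY (Node CY a b) c)
| bm_yx (a b c : tree) :
    bmove (Node CY (Node CY a b) c) (Node CX a (Node CX b c))
| bm_left (ct : ctype) (l l' r : tree) :
    bmove l l' -> bmove (Node ct l r) (Node ct l' r)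
| bm_right (ct : ctype) (l r r' : tree) :
    bmove r r' -> bmove (Node ct l r) (Node ct l r').

Definition bmoves : tree -> tree -> Prop := clos_refl_trans tree bmove.

(* Main.v *)
Require Import Defs.
From Stdlib Require Import Reals List Relations.
Open Scope R_scope.

Lemma bmoves_left ct l l' r : bmoves l l' -> bmoves (Node ct l r) (Node ct l' r).
Proof.
  induction 1.
  - apply rt_step; now constructor.
  - apply rt_refl.
  - eapply rt_trans; eauto.
Qed.

Lemma bmoves_right ct l r r' : bmoves r r' -> bmoves (Node ct l r) (Node ct l r').
Proof.
  induction 1.
  - apply rt_step; now constructor.
  - apply rt_refl.
  - eapply rt_trans; eauto.
Qed.

Lemma root_switch (t : tree) : forall c : ctype,
  exists t1 t', (t1 = t \/ add_caret t t1) /\ bmoves t1 t' /\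
    exists l r, t' = Node c l r.
Proof.
  induction t as [|d l IHl r IHr]; intros c.
  - exists (Node c Leaf Leaf), (Node c Leaf Leaf). split; [right; constructor|].
    split; [apply rt_refl|eauto].
  - destruct (d), c.
    + exists (Node CX l r), (Node CX l r). split; auto. split; [apply rt_refl|eauto].
    + destruct (IHr CX) as (r1 & r' & H1 & H2 & (b & e & ->)).
      exists (Node CX l r1), (Node CY (Node CY l b) e). split.
      { destruct H1 as [->|H1]; [left; auto|right; now constructor]. }
      split; [|eauto].
      eapply rt_trans; [apply bmoves_right; eauto|]. apply rt_step; constructor.
    + destruct (IHl CY) as (l1 & l' & H1 & H2 & (b & e & ->)).
      exists (Node CY l1 r), (Node CX b (Node CX e r)). split.
      { destruct H1 as [->|H1]; [left; auto|right; now constructor]. }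
      split; [|eauto].
      eapply rt_trans; [apply bmoves_left; eauto|]. apply rt_step; constructor.
    + exists (Node CY l r), (Node CY l r). split; auto. split; [apply rt_refl|eauto].
Qed.

Lemma gen (T : tree) (a b : R) (ty : ctype) : forall p k,
  In (a, b, ty) (carets T p k) ->
  exists T1 T' : tree,
    (T1 = T \/ add_caret T T1) /\ bmoves T1 T' /\
    In (a, b, opp_ctype ty) (carets T' p k).
Proof.
  induction T as [|d l IHl r IHr]; intros p k H.
  - simpl in H; destruct H.
  - assert (Hc : forall l' r',
      carets (Node d l' r') p k =
      (p, p + tau ^ k, d) :: carets l' p (match d with CX => k+2 | CY => k+1 end)%nat
        ++ carets r' (p + tau ^ (match d with CX => k+2 | CY => k+1 end)%nat)
                     (match d with CX => k+1 | CY => k+2 end)%nat)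
      by (intros; destruct d; reflexivity).
    rewrite Hc in H.
    destruct H as [H|H].
    + inversion H; subst.
      destruct (root_switch (Node ty l r) (opp_ctype ty)) as (t1 & t' & H1 & H2 & (l' & r' & ->)).
      exists t1, (Node (opp_ctype ty) l' r'). split; auto. split; auto.
      destruct ty; simpl; left; reflexivity.
    + apply in_app_or in H. destruct H as [H|H].
      * destruct (IHl _ _ H) as (l1 & l' & H1 & H2 & H3).
        exists (Node d l1 r), (Node d l' r). split.
        { destruct H1 as [->|H1]; [left; auto|right; now constructor]. }
        split; [now apply bmoves_left|].
        rewrite Hc. right. apply in_or_app. left; exact H3.
      * destruct (IHr _ _ H) as (r1 & r' & H1 & H2 & H3).
        exists (Node d l r1), (Node d l r'). split.
        { destruct H1 as [->|H1]; [left; auto|right; now constructor]. }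
        split; [now apply bmoves_right|].
        rewrite Hc. right. apply in_or_app. right; exact H3.
Qed.

Theorem mainTheorem14 (T : tree) (a b : R) (ty : ctype) :
  In (a, b, ty) (carets T 0 0) ->
  exists T1 T' : tree,
    (T1 = T \/ add_caret T T1) /\ bmoves T1 T' /\
    In (a, b, opp_ctype ty) (carets T' 0 0).
Proof. apply gen. Qed.
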